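(* If $c\in SO(\mathbb{R}_+)$ and $\alpha\in SOS(\mathbb{R}_+)$, then $c\circ\alpha\in SO(\mathbb{R}_+)$, $c-c\circ\alpha\in C_b(\mathbb{R}_+)$, and $\lim_{t\to s}\big(c(t)-c(\alpha(t))\big)=0$ for $s\in\{0,\infty\}$.
   Context: $\mathbb{R}_+=(0,\infty)$. $C_b(\mathbb{R}_+)$: bounded continuous complex functions on $\mathbb{R}_+$. $SO(\mathbb{R}_+)$ is the set of $f\in C_b(\mathbb{R}_+)$ with $\lim_{r\to s}\sup\{|f(t)-f(\tau)|:t,\tau\in[\lambda r,r]\}=0$ for $s\in\{0,\infty\}$ and each (equivalently some) $\lambda\in(0,1)$. $SOS(\mathbb{R}_+)$ is the set of orientation-preserving diffeomorphisms $\alpha$ of $\mathbb{R}_+$ onto itself with no fixed points in $\mathbb{R}_+$ such that $\log\alpha'\in C_b(\mathbb{R}_+)$ and $\alpha'\in SO(\mathbb{R}_+)$. *)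

(* Defs.v *)
From Stdlib Require Import Reals Lra.
From Coquelicot Require Import Coquelicot.
Open Scope R_scope.

(* C_b(R_+): bounded continuous complex-valued functions on (0,oo).
   Functions are total on R; only their values on (0,oo) matter. *)
Definition Cb (f : R -> C) : Prop :=
  (forall t, 0 < t -> continuous f t) /\
  (exists M, forall t, 0 < t -> Cmod (f t) <= M).

(* "lim_{r->s} sup{|f t - f tau| : t,tau in [lambda r, r]} = 0",
   unfolded: for every eps>0 the sup is <= eps for r near s. *)
Definition osc_vanishes_at_0 (f : R -> C) (lam : R) : Prop :=
  forall eps, 0 < eps -> exists delta, 0 < delta /\
    forall r, 0 < r < delta ->
      forall t tau, lam * r <= t <= r -> lam * r <= tau <= r ->
        Cmod (f t - f tau) <= eps.

Definition osc_vanishes_at_oo (f : R -> C) (lam : R) : Prop :=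
  forall eps, 0 < eps -> exists N, 0 < N /\
    forall r, N < r ->
      forall t tau, lam * r <= t <= r -> lam * r <= tau <= r ->
        Cmod (f t - f tau) <= eps.

Definition SO (f : R -> C) : Prop :=
  Cb f /\
  forall lam, 0 < lam < 1 -> osc_vanishes_at_0 f lam /\ osc_vanishes_at_oo f lam.

Definition C1_on_Rplus (a : R -> R) : Prop :=
  (forall t, 0 < t -> ex_derive a t) /\
  (forall t, 0 < t -> continuous (Derive a) t).

Definition orient_pres_diffeo_Rplus (a : R -> R) : Prop :=
  (forall t, 0 < t -> 0 < a t) /\
  C1_on_Rplus a /\
  (exists b : R -> R,
      (forall y, 0 < y -> 0 < b y) /\
      (forall t, 0 < t -> b (a t) = t) /\
      (forall y, 0 < y -> a (b y) = y) /\
      C1_on_Rplus b) /\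
  (forall s t, 0 < s -> s < t -> a s < a t).

Definition SOS (a : R -> R) : Prop :=
  orient_pres_diffeo_Rplus a /\
  (forall t, 0 < t -> a t <> t) /\
  Cb (fun t => RtoC (ln (Derive a t))) /\
  SO (fun t => RtoC (Derive a t)).

(* Main.v *)
Require Import Defs.
From Stdlib Require Import Reals Lra.
From Coquelicot Require Import Coquelicot.
Open Scope R_scope.

Lemma exp_le_mono x y : x <= y -> exp x <= exp y.
Proof. intros H; destruct (Rle_lt_or_eq_dec _ _ H) as [H1|H1].
  left; now apply exp_increasing. subst; lra. Qed.

Lemma deriv_nonneg (a : R -> R) t l :
  0 < t -> (forall s u, 0 < s -> s < u -> a s < a u) -> is_derive a t l -> 0 <= l.
Proof.
  intros Ht Hinc Hd. apply is_derive_Reals in Hd.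
  destruct (Rle_or_lt 0 l) as [H|H]; auto.
  destruct (Hd (-l) ltac:(lra)) as [d Hdd].
  assert (dp := cond_pos d). set (h := d/2).
  assert (hp : 0 < h) by (unfold h; lra).
  assert (hl : Rabs h < d) by (rewrite Rabs_pos_eq; unfold h; lra).
  specialize (Hdd h ltac:(lra) hl).
  assert (Hq : 0 < (a (t + h) - a t) / h).
  { apply Rdiv_lt_0_compat; auto. specialize (Hinc t (t+h) Ht ltac:(lra)); lra. }
  apply Rabs_def2 in Hdd. lra.
Qed.

Lemma deriv_pos (a : R -> R) t :
  0 < t -> orient_pres_diffeo_Rplus a -> 0 < Derive a t.
Proof.
  intros Ht [Hpos [[Hda Hca] [[b [Hbp [Hba [Hab [Hdb Hcb]]]]] Hinc]]].
  assert (D1 := Derive_correct _ _ (Hda t Ht)).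
  assert (D2 := Derive_correct _ _ (Hdb (a t) (Hpos t Ht))).
  assert (D3 := is_derive_comp _ _ _ _ _ D2 D1).
  assert (D4 : is_derive (fun x => x) t (Derive a t * Derive b (a t))).
  { eapply is_derive_ext_loc; [|exact D3].
    exists (mkposreal t Ht). intros y Hy. apply Hba.
    unfold ball in Hy; simpl in Hy; unfold AbsRing_ball, abs, minus, plus, opp in Hy; simpl in Hy.
    apply Rabs_def2 in Hy. lra. }
  assert (D5 : is_derive (fun x : R => x) t 1) by (apply (is_derive_id t)).
  apply is_derive_unique in D4. apply is_derive_unique in D5.
  assert (E : Derive a t * Derive b (a t) = 1) by (rewrite <- D4; exact D5). clear D4 D5.
  assert (Hn := deriv_nonneg a t _ Ht Hinc D1).
  destruct Hn as [Hn|Hn]; auto. rewrite <- Hn in E. lra.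
Qed.

Lemma deriv_bounds a : SOS a -> exists m0 M0, 0 < m0 /\ forall t, 0 < t -> m0 <= Derive a t <= M0.
Proof.
  intros [Hd [_ [[_ [B HB]] _]]].
  exists (exp (-B)), (exp B). split. apply exp_pos.
  intros t Ht. specialize (HB t Ht). rewrite Cmod_R in HB.
  assert (P := deriv_pos a t Ht Hd).
  rewrite <- (exp_ln _ P). apply Rabs_le_between' in HB || idtac.
  destruct (Rabs_def2b _ _ HB) as [H1 H2] || idtac.
  split; apply exp_le_mono; unfold Rabs in HB; destruct (Rcase_abs (ln (Derive a t))); lra.
Qed.

Lemma mvt_bound a m0 M0 s t : orient_pres_diffeo_Rplus a ->
  (forall t, 0 < t -> m0 <= Derive a t <= M0) -> 0 < s -> s < t ->
  m0 * (t - s) <= a t - a s <= M0 * (t - s).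
Proof.
  intros [Hpos [[Hda Hca] _]] HD Hs Hst.
  destruct (MVT_gen a s t (Derive a)) as [c [Hc E]].
  - intros x Hx. rewrite Rmin_left in Hx by lra. rewrite Rmax_right in Hx by lra.
    apply Derive_correct, Hda; lra.
  - intros x Hx. rewrite Rmin_left in Hx by lra. rewrite Rmax_right in Hx by lra.
    apply continuity_pt_filterlim. exact (ex_derive_continuous (K:=R_AbsRing) (V:=R_NormedModule) a x (Hda x ltac:(lra))).
  - rewrite Rmin_left in Hc by lra. rewrite Rmax_right in Hc by lra.
    rewrite E. specialize (HD c ltac:(lra)). split; nra.
Qed.

Lemma alpha_bounds a : SOS a -> exists m M, 0 < m < 1 /\ 1 < M /\
  forall t, 0 < t -> m * t <= a t <= M * t.
Proof.
  intros HS. destruct (deriv_bounds a HS) as [m0 [M0 [Hm0 HD]]].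
  assert (Hd := proj1 HS).
  assert (HM0 : m0 <= M0) by (destruct (HD 1 ltac:(lra)); lra).
  exists (Rmin m0 (1/2)), (Rmax M0 2).
  split. split. apply Rmin_glb_lt; lra. assert (Rmin m0 (1/2) <= 1/2) by apply Rmin_r. lra.
  split. assert (2 <= Rmax M0 2) by apply Rmax_r. lra.
  intros t Ht.
  assert (Hmin : Rmin m0 (1/2) <= m0) by apply Rmin_l.
  assert (Hmax : M0 <= Rmax M0 2) by apply Rmax_l.
  destruct Hd as [Hpos [HC1 [[b [Hbp [Hba [Hab _]]]] Hinc]]].
  assert (Hat := Hpos t Ht).
  split.
  - cut (m0 * t <= a t). { intros; nra. }
    destruct (Rle_or_lt (m0 * t) (a t)) as [H|H]; auto.
    set (s := (m0 * t - a t) / (2 * m0)).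
    assert (Hs0 : 0 < s) by (unfold s; apply Rdiv_lt_0_compat; lra).
    assert (Hs1 : s * (2 * m0) = m0 * t - a t) by (unfold s; field; lra).
    assert (Hst : s < t) by nra.
    destruct (mvt_bound a m0 M0 s t (proj1 HS) HD Hs0 Hst) as [H1 H2].
    assert (Has := Hpos s Hs0). nra.
  - cut (a t <= M0 * t). { intros; nra. }
    destruct (Rle_or_lt (a t) (M0 * t)) as [H|H]; auto.
    set (y := (a t - M0 * t) / 2).
    assert (Hy0 : 0 < y) by (unfold y; lra).
    assert (Hyt : y < a t) by (unfold y; nra).
    assert (Hby := Hbp y Hy0).
    assert (Hbt : b y < t).
    { destruct (Rlt_or_le (b y) t) as [H'|H']; auto.
      destruct (Rle_lt_or_eq_dec _ _ H') as [H''|H''].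
      - specialize (Hinc t (b y) Ht H''). rewrite Hab in Hinc by lra. lra.
      - rewrite H'' in Hyt. rewrite Hab in Hyt by lra. lra. }
    destruct (mvt_bound a m0 M0 (b y) t (proj1 HS) HD Hby Hbt) as [H1 H2].
    rewrite Hab in H2 by lra. unfold y in *. nra.
Qed.

Lemma ball0_C (z : C) (eps : posreal) : Cmod z < eps -> ball (RtoC 0) eps z.
Proof. intros H. apply (@norm_compat1 C_AbsRing C_NormedModule).
change (Cmod (Cminus z (RtoC 0)) < eps). replace (Cminus z (RtoC 0)) with z. exact H. ring. Qed.

Theorem lemma2p3 (c : R -> C) (alpha : R -> R) :
  SO c -> SOS alpha ->
  SO (fun t => c (alpha t)) /\
  Cb (fun t => (c t - c (alpha t))%C) /\
  filterlim (fun t => (c t - c (alpha t))%C) (at_right 0) (locally (RtoC 0)) /\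
  filterlim (fun t => (c t - c (alpha t))%C) (Rbar_locally p_infty) (locally (RtoC 0)).
Proof.
  intros [[Hcc [K HK]] Hso] HS.
  destruct (alpha_bounds alpha HS) as [m [M [Hm [HM Hb]]]].
  assert (Hpos : forall t, 0 < t -> 0 < alpha t) by (apply (proj1 HS)).
  assert (Hac : forall t, 0 < t -> continuous alpha t).
  { intros t Ht. destruct HS as [[_ [[Hda _] _]] _].
    exact (ex_derive_continuous (K:=R_AbsRing) (V:=R_NormedModule) alpha t (Hda t Ht)). }
  assert (Hcomp : forall t, 0 < t -> continuous (fun t => c (alpha t)) t).
  { intros t Ht. apply continuous_comp. apply Hac; auto. apply Hcc; auto. }
  split; [split; [split|] | split; [split| split] ].
  - exact Hcomp.
  - exists K. intros t Ht. apply HK; auto.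
  - intros lam Hlam.
    set (mu := m * lam / M).
    assert (Hmu : 0 < mu < 1).
    { unfold mu; split. apply Rdiv_lt_0_compat; nra.
      apply (Rmult_lt_reg_r M); try lra. unfold Rdiv; rewrite Rmult_assoc, Rinv_l by lra. nra. }
    assert (Hmu2 : mu * M = m * lam) by (unfold mu; field; lra).
    destruct (Hso mu Hmu) as [H0 Hoo]. split.
    + intros eps Heps. destruct (H0 eps Heps) as [d [Hd Hd']].
      exists (d / M). split. apply Rdiv_lt_0_compat; lra.
      intros r Hr t tau Ht Htau.
      assert (Hr' : r * M < d) by (destruct Hr as [_ Hr]; apply (Rmult_lt_reg_r (/M)); [apply Rinv_0_lt_compat; lra|]; rewrite Rmult_assoc, Rinv_r by lra; lra).
      assert (Hlr : 0 < lam * r) by nra.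
      destruct (Hb t ltac:(lra)). destruct (Hb tau ltac:(lra)).
      apply (Hd' (M * r)); [split; nra| |]; split; nra.
    + intros eps Heps. destruct (Hoo eps Heps) as [N [HN HN']].
      exists (N / M). split. apply Rdiv_lt_0_compat; lra.
      intros r Hr t tau Ht Htau.
      assert (Hr' : N < r * M) by (apply (Rmult_lt_reg_r (/M)); [apply Rinv_0_lt_compat; lra|]; rewrite Rmult_assoc, Rinv_r by lra; lra).
      assert (Hr0 : 0 < r) by nra.
      assert (Hlr : 0 < lam * r) by nra.
      destruct (Hb t ltac:(lra)). destruct (Hb tau ltac:(lra)).
      apply (HN' (M * r)); [nra| |]; split; nra.
  - intros t Ht. apply (continuous_minus c (fun t => c (alpha t))). apply Hcc; auto. apply Hcomp; auto.
  - exists (K + K). intros t Ht. unfold Cminus.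
    eapply Rle_trans. apply Cmod_triangle. rewrite Cmod_opp.
    apply Rplus_le_compat; apply HK; auto.
  - set (mu := m / M).
    assert (Hmu : 0 < mu < 1).
    { unfold mu; split. apply Rdiv_lt_0_compat; nra.
      apply (Rmult_lt_reg_r M); try lra. unfold Rdiv; rewrite Rmult_assoc, Rinv_l by lra. nra. }
    assert (Hmu2 : mu * M = m) by (unfold mu; field; lra).
    destruct (Hso mu Hmu) as [H0 _].
    apply (proj2 (filterlim_locally (U:=C_UniformSpace) _ _)). intros eps.
    assert (He2 : 0 < eps / 2) by (destruct eps; simpl; lra).
    destruct (H0 _ He2) as [d [Hd Hd']].
    assert (HdM : 0 < d / M) by (apply Rdiv_lt_0_compat; lra).
    exists (mkposreal _ HdM). intros t Hball Ht0. apply ball0_C.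
    assert (Htd : t < d / M).
    { unfold ball in Hball; simpl in Hball; unfold AbsRing_ball, abs, minus, plus, opp in Hball; simpl in Hball.
      apply Rabs_def2 in Hball. lra. }
    assert (Hr' : t * M < d) by (apply (Rmult_lt_reg_r (/M)); [apply Rinv_0_lt_compat; lra|]; rewrite Rmult_assoc, Rinv_r by lra; lra).
    destruct (Hb t Ht0).
    eapply Rle_lt_trans. apply (Hd' (M * t)); [split; nra| |]; split; nra.
    destruct eps; simpl; lra.
  - set (mu := m / M).
    assert (Hmu : 0 < mu < 1).
    { unfold mu; split. apply Rdiv_lt_0_compat; nra.
      apply (Rmult_lt_reg_r M); try lra. unfold Rdiv; rewrite Rmult_assoc, Rinv_l by lra. nra. }
    assert (Hmu2 : mu * M = m) by (unfold mu; field; lra).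
    destruct (Hso mu Hmu) as [_ Hoo].
    apply (proj2 (filterlim_locally (U:=C_UniformSpace) _ _)). intros eps.
    assert (He2 : 0 < eps / 2) by (destruct eps; simpl; lra).
    destruct (Hoo _ He2) as [N [HN HN']].
    exists (N / M). intros t Ht.  apply ball0_C.
    assert (Hr' : N < t * M) by (apply (Rmult_lt_reg_r (/M)); [apply Rinv_0_lt_compat; lra|]; rewrite Rmult_assoc, Rinv_r by lra; lra).
    assert (Ht0 : 0 < t) by nra.
    destruct (Hb t Ht0).
    eapply Rle_lt_trans. apply (HN' (M * t)); [nra| |]; split; nra.
    destruct eps; simpl; lra.
Qed.
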